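(* Let $\hat{\mathcal D}=(\mathcal D,\omega,\theta)$ be a marked DAG over $X$ and $\tilde{\mathcal D}=(\mathcal D',\omega',\theta')$ its compression as defined below. Then $\Delta_I(\tilde{\mathcal D})\le\Delta_I(\hat{\mathcal D})$.
   Context: A DAG over a finite set $X$ is a finite directed acyclic graph $\mathcal D=(V,A)$ with $X\subseteq V$, a single source $r$, and whose set of sinks is exactly $X$; $\mathcal P_{\mathcal D}$ is the set of directed paths from $r$ to a sink. A marked DAG is $(\mathcal D,\omega,\theta)$ with $\omega\in\mathbb R_{>0}^A$, $\omega_{uv}>\omega_{vw}$ whenever $uv,vw\in A$, and $\theta\in\mathbb R_{>0}^A$ with $\sum_{v:uv\in A}\theta_{uv}=1$ for $u\in V\setminus X$. For a path $\gamma$, $\theta(\gamma):=\prod_{uv\in\gamma}\theta_{uv}$, and the information depth is $\Delta_I:=\max_{\gamma\in\mathcal P_{\mathcal D}}\log(1/\theta(\gamma))$. For $u\in V$, $\sigma(u)$ is the number of directed paths in $\mathcal D$ from $u$ to a point of $X$. An arc $uv$ is heavy if $v\notin X$ and $\sigma(v)>\sigma(u)/2$, light otherwise. A path $\langle u_1u_2,\dots,u_{m-1}u_m\rangle$ is heavy-light if its arcs are heavy except the last, which is light. The compression $\tilde{\mathcal D}=(\mathcal D',\omega',\theta')$, $\mathcal D'=(V,A')$, has an arc $u_1u_m\in A'$ iff there is a heavy-light path $\langle u_1u_2,\dots,u_{m-1}u_m\rangle$ in $\mathcal D$ (which is then unique), with $\omega'_{u_1u_m}:=\omega_{u_{m-1}u_m}$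 and $\theta'_{u_1u_m}:=\prod_{i=1}^{m-1}\theta_{u_iu_{i+1}}$. *)

(* Defs.v *)
From HB Require Import structures.
From mathcomp Require Import all_boot all_order all_algebra.
From mathcomp Require Import reals exp.
Set Implicit Arguments. Unset Strict Implicit. Unset Printing Implicit Defensive.
Import Order.TTheory GRing.Theory Num.Theory.
Local Open Scope ring_scope.

Fixpoint all_seqs (V : finType) (n : nat) : seq (seq V) :=
  if n is n'.+1 then [::] :: [seq x :: s | x <- enum V, s <- all_seqs V n']
  else [:: [::]].

(* A directed path starting at u is encoded by the list s of the vertices
   following u: the path is u :: s, its arcs are zip (u :: s) s. *)

Definition is_sink (V : finType) (A : rel V) (v : V) : bool := [forall w, ~~ A v w].

Definition acyclic (V : finType) (A : rel V) : Prop :=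
  forall u s, path A u s -> last u s = u -> s = [::].

Definition dag_over (V : finType) (A : rel V) (X : {set V}) (r : V) : Prop :=
  [/\ acyclic A,
      (forall v, (forall u, ~~ A u v) <-> v = r) &
      (forall v, is_sink A v <-> v \in X)].

Definition marked (R : realType) (V : finType) (A : rel V) (X : {set V})
    (omega theta : V -> V -> R) : Prop :=
  [/\ forall u v, A u v -> 0 < omega u v,
      forall u v w, A u v -> A v w -> omega v w < omega u v,
      forall u v, A u v -> 0 < theta u v &
      forall u, u \notin X -> \sum_(v | A u v) theta u v = 1].

Definition path_weight (R : realType) (V : finType) (theta : V -> V -> R)
    (u : V) (s : seq V) : R :=
  \prod_(e <- zip (u :: s) s) theta e.1 e.2.

(* directed paths from r to a sink of (V, A); in an acyclic graph every path
   has at most #|V| - 1 arcs, so all of them are enumerated. *)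
Definition root_sink_paths (V : finType) (A : rel V) (r : V) : seq (seq V) :=
  [seq s <- all_seqs V #|V| | path A r s && is_sink A (last r s)].

(* information depth: max over root-to-sink paths of log(1/theta(gamma)).
   (all these values are >= 0 for the graphs considered, so the seed 0 of
   the max is harmless) *)
Definition info_depth (R : realType) (V : finType) (A : rel V)
    (theta : V -> V -> R) (r : V) : R :=
  \big[Num.max/0]_(s <- root_sink_paths A r) ln ((path_weight theta r s)^-1).

Definition sigma (V : finType) (A : rel V) (X : {set V}) (u : V) : nat :=
  count (fun s => path A u s && (last u s \in X)) (all_seqs V #|V|).

Definition heavy (V : finType) (A : rel V) (X : {set V}) (u v : V) : bool :=
  (v \notin X) && (sigma A X u < 2 * sigma A X v)%N.

Definition hl_path (V : finType) (A : rel V) (X : {set V}) (u : V) (s : seq V)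
    : bool :=
  let t := take (size s).-1 s in
  [&& s != [::], path A u s, path (heavy A X) u t
    & ~~ heavy A X (last u t) (last u s)].

Definition hl_paths (V : finType) (A : rel V) (X : {set V}) (u w : V)
    : seq (seq V) :=
  [seq s <- all_seqs V #|V| | hl_path A X u s && (last u s == w)].

Definition comp_arc (V : finType) (A : rel V) (X : {set V}) : rel V :=
  fun u w => hl_paths A X u w != [::].

Definition comp_omega (R : realType) (V : finType) (A : rel V) (X : {set V})
    (omega : V -> V -> R) (u w : V) : R :=
  if hl_paths A X u w is s :: _ then
    omega (last u (take (size s).-1 s)) (last u s) else 0.

Definition comp_theta (R : realType) (V : finType) (A : rel V) (X : {set V})
    (theta : V -> V -> R) (u w : V) : R :=
  if hl_paths A X u w is s :: _ then path_weight theta u s else 0.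

(* Main.v *)
Require Import Defs.
From HB Require Import structures.
From mathcomp Require Import all_boot all_order all_algebra.
From mathcomp Require Import reals exp.
Import Order.TTheory GRing.Theory Num.Theory.
Local Open Scope ring_scope.

Section Helpers.
Variables (V : finType) (A : rel V) (X : {set V}).

Lemma acyc_uniq : acyclic A -> forall u s, path A u s -> uniq (u :: s).
Proof.
move=> Hac u s; elim: s u => [|x s IH] u //= Hp0.
have /andP[Aux Hp] := Hp0.
have := IH x Hp => /= /andP[Hxs Hu]; rewrite Hxs Hu !andbT.
apply/negP => Hin.
have Hq : path A u (x :: s) by rewrite /= Aux Hp.
move: Hq; case/splitPr: Hin => p1 p2 Hq.
have Hp2 : path A u (rcons p1 u).
  by move: Hq; rewrite cat_path rcons_path => /andP[-> /= /andP[-> _]].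
have := Hac _ _ Hp2; rewrite last_rcons => /(_ erefl).
by case: p1 {Hq Hp2}.
Qed.

Lemma mem_all_seqs n (s : seq V) : (size s <= n)%N -> s \in all_seqs V n.
Proof.
elim: n s => [|n IH] [|x s] //= Hs.
rewrite in_cons; apply/orP; right.
apply: (allpairs_f_dep (fun x s => x :: s)); first by rewrite mem_enum.
exact: IH.
Qed.

Lemma acyc_all_seqs : acyclic A -> forall u s, path A u s -> s \in all_seqs V #|V|.
Proof.
move=> Hac u s Hp; apply: mem_all_seqs.
have /card_uniqP Hc := acyc_uniq Hac u s Hp.
have := max_card (mem (u :: s)); rewrite Hc /=; exact: ltnW.
Qed.


Lemma hl_exists : acyclic A -> (forall v, is_sink A v <-> v \in X) ->
  forall n w t, (#|V| - size t <= n)%N -> path A w t -> path (heavy A X) w t ->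
  last w t \notin X -> exists s, hl_path A X w s.
Proof.
move=> Hac Hsink; elim=> [|n IH] w t Hn Hp Hh Hx.
  have /card_uniqP Hc := acyc_uniq Hac w t Hp.
  have := max_card (mem (w :: t)); rewrite Hc /=.
  by move: Hn; rewrite leqn0 subn_eq0 => Hn H; have := leq_trans H Hn; rewrite ltnn.
have : ~~ is_sink A (last w t) by apply/negP => /Hsink; apply/negP.
move/forallPn=> [v /negPn Axv].
case Hhv: (heavy A X (last w t) v).
  apply: (IH w (rcons t v)).
  - by rewrite size_rcons subnS; move: Hn; case: (#|V| - size t)%N.
  - by rewrite rcons_path Hp Axv.
  - by rewrite rcons_path Hh Hhv.
  - by rewrite last_rcons; move: Hhv; rewrite /heavy => /andP[].
exists (rcons t v).
rewrite /hl_path size_rcons /= -cats1 take_size_cat // cat_path Hp /= Axv Hh /=.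
by rewrite cats1 last_rcons Hhv andbT; case: (t) => //.
Qed.

Definition chosen u w := if hl_paths A X u w is p :: _ then p else [::].
Fixpoint expand u s := if s is w :: s' then chosen u w ++ expand w s' else [::].

Lemma pw_cons (R : realType) (theta : V -> V -> R) u x s :
  path_weight theta u (x :: s) = theta u x * path_weight theta x s.
Proof. by rewrite /path_weight /= big_cons. Qed.

Lemma pw_cat (R : realType) (theta : V -> V -> R) u p q :
  path_weight theta u (p ++ q) = path_weight theta u p * path_weight theta (last u p) q.
Proof.
elim: p u => [|x p IH] u /=; first by rewrite /path_weight big_nil mul1r.
by rewrite !pw_cons IH mulrA.
Qed.

Lemma expand_ok (R : realType) (theta : V -> V -> R) u s :
  path (comp_arc A X) u s ->
  [/\ path A u (expand u s), last u (expand u s) = last u s &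
      path_weight theta u (expand u s) = path_weight (comp_theta A X theta) u s].
Proof.
elim: s u => [|w s IH] u /=; first by move=> _; split; rewrite // /path_weight !big_nil.
move=> /andP[Hc Hs]; have [H1 H2 H3] := IH w Hs.
move: Hc; rewrite /comp_arc /chosen pw_cons /comp_theta.
case E: (hl_paths A X u w) => [|p l] // _.
have : p \in hl_paths A X u w by rewrite E mem_head.
rewrite mem_filter => /andP[/andP[Hhl /eqP Hl] _].
move: Hhl => /and4P[_ Hpa _ _].
by split; rewrite ?cat_path ?last_cat ?pw_cat Hl ?Hpa ?H1 ?H2 ?H3.
Qed.

Lemma comp_sink : acyclic A -> (forall v, is_sink A v <-> v \in X) ->
  forall v, is_sink (comp_arc A X) v -> v \in X.
Proof.
move=> Hac Hsink v Hv; apply/negPn/negP => Hx.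
have [s Hs] := hl_exists Hac Hsink #|V| v [::] (leq_subr 0 #|V|) (isT : path A v [::]) (isT : path (heavy A X) v [::]) Hx.
move: Hv => /forallP/(_ (last v s)); rewrite /comp_arc negbK => /eqP Hn.
have Hpa : path A v s by move: Hs => /and4P[].
have : s \in hl_paths A X v (last v s).
  by rewrite mem_filter Hs eqxx (acyc_all_seqs Hac v s Hpa).
by rewrite Hn.
Qed.
End Helpers.
Theorem lemma3p15 (R : realType) (V : finType) (A : rel V) (X : {set V}) (r : V)
    (omega theta : V -> V -> R) :
  dag_over A X r ->
  marked A X omega theta ->
  info_depth (comp_arc A X) (comp_theta A X theta) r <= info_depth A theta r.
Proof.
move=> [Hac _ Hsink] _.
rewrite {1}/info_depth.
set RHS := info_depth A theta r.
have H0 : 0 <= RHS.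
  rewrite /RHS /info_depth; elim: (root_sink_paths A r) => [|a l IHl].
    by rewrite big_nil.
  by rewrite big_cons le_max IHl orbT.
rewrite big_seq; apply: (big_ind (fun x => x <= RHS)) => //.
  by move=> x y Hx Hy; rewrite ge_max Hx Hy.
move=> s; rewrite mem_filter => /andP[/andP[Hp Hs] _].
have [He1 He2 He3] := @expand_ok V A X R theta r s Hp.
rewrite -He3.
have Hmem : expand V A X r s \in root_sink_paths A r.
  rewrite mem_filter He1 He2 (@acyc_all_seqs V A Hac r _ He1) andbT /=.
  by apply/Hsink; exact: (@comp_sink V A X Hac Hsink).
rewrite /RHS /info_depth; move: Hmem; elim: (root_sink_paths A r) => [|a l IHl] //.
rewrite in_cons big_cons le_max => /orP[/eqP Ha|Ha].
  by apply/orP; left; rewrite -Ha; apply: lexx.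
by apply/orP; right; apply: IHl.
Qed.
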